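(* Let $T$ be a weighted tree that is not a star. If $T$ has at least two adjacent pendant edges (two pendant edges sharing a vertex), then $T^{\#}$ is not a tree.
   Context: A weighted tree has a nonzero real weight on each edge; its adjacency matrix $A$ has $(i,j)$ entry equal to the weight of edge $v_iv_j$, or $0$ if no edge. $A^{\#}$ is the group inverse of $A$ (unique $X$ with $AXA=A$, $XAX=X$, $AX=XA$). The group inverse graph $T^{\#}$ is the weighted graph on the same vertex set as $T$ with $v_iv_j$ an edge iff $(A^{\#})_{ij}\neq0$, weighted by that entry. A pendant edge is an edge incident to a vertex of degree one. *)

(* Defs.v *)
From HB Require Import structures.
From mathcomp Require Import all_boot all_order all_algebra.
Set Implicit Arguments. Unset Strict Implicit. Unset Printing Implicit Defensive.
Import Order.TTheory GRing.Theory Num.Theory.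
Local Open Scope ring_scope.

Section Graphs.
Variable T : finType.
Implicit Type e : rel T.

Definition simple_graph e : Prop :=
  (forall x, ~~ e x x) /\ (forall x y, e x y = e y x).

Definition connected_graph e : Prop := forall x y, connect e x y.

Definition acyclic e : Prop :=
  forall c : seq T, uniq c -> (3 <= size c)%N -> ~~ cycle e c.

Definition is_tree e : Prop := simple_graph e /\ connected_graph e /\ acyclic e.

Definition degree e (x : T) : nat := #|[set y | e x y]|.

Definition is_star e : Prop := is_tree e /\ exists c, forall v, v != c -> e c v.

Definition pendant_edge e (x y : T) : bool :=
  e x y && ((degree e x == 1%N) || (degree e y == 1%N)).

Definition has_adjacent_pendant_edges e : Prop :=
  exists x y z, [/\ x != z, pendant_edge e x y & pendant_edge e y z].
End Graphs.

(* The (weighted) graph underlying a square matrix: v_i v_j is an edge iff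
   i != j and the (i,j) entry is nonzero (the weight is that entry). *)
Definition mx_graph (R : nzRingType) (n : nat) (M : 'M[R]_n) : rel 'I_n :=
  fun i j => (i != j) && (M i j != 0).

Definition weighted_tree_adj (R : nzRingType) (n : nat) (A : 'M[R]_n) : Prop :=
  A^T = A /\ (forall i, A i i = 0) /\ is_tree (mx_graph A).

Definition group_inverse (R : nzRingType) (n : nat) (A X : 'M[R]_n) : Prop :=
  [/\ A *m X *m A = A, X *m A *m X = X & A *m X = X *m A].

(* Main.v *)
Require Import Defs.
From HB Require Import structures.
From mathcomp Require Import all_boot all_order all_algebra.
From mathcomp Require Import ring.
Import Order.TTheory GRing.Theory Num.Theory.
Local Open Scope ring_scope.

Lemma deg1_nbr (T : finType) (e : rel T) x y k :
  degree e x = 1%N -> e x y -> e x k -> k = y.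
Proof.
move=> /eqP /cards1P [w Hw] exy exk.
have hy : y \in [set y | e x y] by rewrite inE.
have hk : k \in [set y | e x y] by rewrite inE.
by move: hy hk; rewrite Hw !inE => /eqP -> /eqP ->.
Qed.

Lemma closed_path (T : finType) (e : rel T) (S : pred T) a b :
  (forall u v, e u v -> S u -> S v) -> connect e a b -> S a -> S b.
Proof.
move=> HS /connectP [p pth ->].
elim: p a pth => [|c p IH] a //= /andP [eac pth] Sa.
apply: IH pth _; exact: HS eac Sa.
Qed.

Lemma mul_col_supp (R : realFieldType) n (M A : 'M[R]_n) k x y :
  (forall j, j != y -> A j x = 0) -> (M *m A) k x = M k y * A y x.
Proof.
move=> Hj; rewrite mxE (bigD1 y) //= big1 ?addr0 // => j /Hj ->.
by rewrite mulr0.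
Qed.

Lemma mul_row_supp (R : realFieldType) n (M A : 'M[R]_n) k x y :
  (forall j, j != y -> M x j = 0) -> (M *m A) x k = M x y * A y k.
Proof.
move=> Hj; rewrite mxE (bigD1 y) //= big1 ?addr0 // => j /Hj ->.
by rewrite mul0r.
Qed.

Lemma ginv_unique (R : realFieldType) n (A X Y : 'M[R]_n) :
  group_inverse A X -> group_inverse A Y -> X = Y.
Proof.
move=> [AXA XAX CX] [AYA YAY CY].
have P1 : A *m X = (A *m Y) *m (A *m X).
  by rewrite -{1}AYA !mulmxA.
have P2 : A *m X = (A *m X) *m (A *m Y).
  have E : A *m X = X *m (A *m Y *m A) by rewrite AYA.
  by rewrite {1}E !mulmxA -CX -(mulmxA _ Y) -CY mulmxA.
have P3 : A *m Y = (A *m X) *m (A *m Y).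
  by rewrite -{1}AXA !mulmxA.
have PQ : A *m X = A *m Y by rewrite P2 -P3.
by rewrite -XAX -mulmxA PQ mulmxA -CX PQ CY YAY.
Qed.

Arguments deg1_nbr {T e x y k}.
Arguments closed_path {T e} S {a b}.
Arguments mul_col_supp {R n M A k x} y.
Arguments mul_row_supp {R n M A k x} y.
Arguments ginv_unique {R n A X Y}.

Theorem lemma2p8 (R : realFieldType) (n : nat) (A X : 'M[R]_n) :
  weighted_tree_adj A ->
  ~ is_star (mx_graph A) ->
  has_adjacent_pendant_edges (mx_graph A) ->
  group_inverse A X ->
  ~ is_tree (mx_graph X).
Proof.
move=> [HAT [Hdiag HT]] Hnstar [x [y [z [Hxz pxy pyz]]]] HX HTX.
have [[Hirr Hsym] [Hconn Hacyc]] := HT.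
have [[XHirr XHsym] [XHconn XHacyc]] := HTX.
have [HAXA HXAX HC] := HX.
have Asym i j : A i j = A j i by rewrite -{1}HAT mxE.
have HXT : group_inverse A X^T.
  split.
  - by apply: trmx_inj; rewrite !trmx_mul trmxK HAT mulmxA HAXA.
  - by apply: trmx_inj; rewrite !trmx_mul trmxK HAT mulmxA HXAX.
  - by apply: trmx_inj; rewrite !trmx_mul trmxK HAT HC.
have Xsym i j : X i j = X j i.
  by rewrite {1}(ginv_unique HX HXT) mxE.
move: pxy pyz => /andP [exy dxy] /andP [eyz dyz].
have eyx : mx_graph A y x by rewrite Hsym.
have ezy : mx_graph A z y by rewrite Hsym.
have dy : degree (mx_graph A) y != 1%N.
  apply/negP => /eqP dy1; move/negP: Hxz; apply.
  by rewrite (deg1_nbr dy1 eyz eyx).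
have dx : degree (mx_graph A) x = 1%N.
  by move: dxy; rewrite (negbTE dy) orbF => /eqP.
have dz : degree (mx_graph A) z = 1%N.
  by move: dyz; rewrite (negbTE dy) /= => /eqP.
have pend0 v : degree (mx_graph A) v = 1%N -> mx_graph A v y ->
    forall k, k != y -> A v k = 0.
  move=> dv evy k kny.
  case: (eqVneq v k) => [<-|vk]; first exact: Hdiag.
  case: (eqVneq (A v k) 0) => // Avk; exfalso.
  have evk : mx_graph A v k by rewrite /mx_graph vk Avk.
  by move: kny; rewrite (deg1_nbr dv evy evk) eqxx.
have Ax0 := pend0 x dx exy.
have Az0 := pend0 z dz ezy.
have ha : A y x != 0 by move: eyx => /andP [].
have hb : A y z != 0 by move: eyz => /andP [].
have XXA : X *m X *m A = X by rewrite -mulmxA -HC mulmxA HXAX.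
have colrel k : A y z * X k x = A y x * X k z.
  have h1 : X k x = (X *m X) k y * A y x.
    by rewrite -{1}XXA (@mul_col_supp _ _ (X *m X) A k _ y) // => j jy; rewrite Asym Ax0.
  have h2 : X k z = (X *m X) k y * A y z.
    by rewrite -{1}XXA (@mul_col_supp _ _ (X *m X) A k _ y) // => j jy; rewrite Asym Az0.
  rewrite h1 h2; ring.
have rowrel k : A y z * X x k = A y x * X z k by rewrite Xsym (Xsym z) colrel.
have yx : y != x by rewrite eq_sym; move: exy => /andP [].
have yz : y != z by rewrite eq_sym; move: ezy => /andP [].
have eXrel k : k != x -> k != z -> mx_graph X x k = mx_graph X z k.
  move=> kx kz; rewrite /mx_graph (eq_sym x) kx (eq_sym z) kz /=.
  have := rowrel k.
  case: (eqVneq (X x k) 0) => H1; case: (eqVneq (X z k) 0) => H2 //=.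
  - by rewrite H1 mulr0 => /esym/eqP; rewrite mulf_eq0 (negbTE ha) (negbTE H2).
  - by rewrite H2 mulr0 => /eqP; rewrite mulf_eq0 (negbTE hb) (negbTE H1).
have [i [ix iz exi]] : exists i, [/\ i != x, i != z & mx_graph X x i].
  case: (boolP [exists i, [&& i != x, i != z & mx_graph X x i]]).
    by move=> /existsP [i /and3P [? ? ?]]; exists i.
  move=> /existsPn Hn; exfalso.
  have cl : forall u v, mx_graph X u v ->
      (fun w => (w == x) || (w == z)) u -> (fun w => (w == x) || (w == z)) v.
    move=> u v euv /= /orP [] /eqP eu; subst u;
      apply/negPn/negP => /norP [vx vz]; move: (Hn v); rewrite vx vz /=.
      by rewrite euv.
    by rewrite (eXrel v vx vz) euv.
  by move: (closed_path _ cl (XHconn x y)) => /=; rewrite eqxx (negbTE yx) (negbTE yz) => /(_ isT).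
have eXxz0 : X x z = 0.
  case: (eqVneq (X x z) 0) => // Hxz0; exfalso.
  have exz : mx_graph X x z by rewrite /mx_graph Hxz Hxz0.
  have eiz : mx_graph X i z by rewrite XHsym -eXrel.
  move: (XHacyc [:: x; i; z]) => /=.
  rewrite !inE negb_or (eq_sym x i) ix Hxz iz /= => /(_ isT isT).
  by rewrite exi eiz XHsym exz.
have Rowx0 k : k != i -> X x k = 0.
  move=> ki.
  case: (eqVneq k z) => [->//|kz].
  case: (eqVneq k x) => [->|kx].
    have := colrel x; rewrite eXxz0 mulr0 => /eqP; rewrite mulf_eq0 (negbTE hb).
    by move/eqP.
  case: (eqVneq (X x k) 0) => // Hxk0; exfalso.
  have exk : mx_graph X x k by rewrite /mx_graph eq_sym kx Hxk0.
  have eiz : mx_graph X i z by rewrite XHsym -eXrel.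
  move: (XHacyc [:: x; i; z; k]) => /=.
  rewrite !inE !negb_or (eq_sym x i) ix Hxz (eq_sym x k) kx iz /= (eq_sym i k) ki (eq_sym z k) kz /= => /(_ isT isT).
  by rewrite exi eiz -eXrel // exk XHsym exk.
have c0 : X x i != 0 by move: exi => /andP [].
have Prow j : (A *m X) x j = X x i * A i j.
  by rewrite HC (@mul_row_supp _ _ X A j x i).
case: (eqVneq i y) => [eiy|iny].
- subst i.
  have [w [wy nyw]] : exists w, w != y /\ ~~ mx_graph A y w.
    case: (boolP [exists w, (w != y) && ~~ mx_graph A y w]).
      by move=> /existsP [w /andP [? ?]]; exists w.
    move=> /existsPn Hn; exfalso; apply: Hnstar; split => //.
    exists y => v vy; move: (Hn v); by rewrite vy /= negbK.
  have [u [p [eyu eup py]]] : exists u p,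
      [/\ mx_graph A y u, mx_graph A u p & p != y].
    case: (boolP [exists u, exists p, [&& mx_graph A y u, mx_graph A u p & p != y]]).
      by move=> /existsP [u /existsP [p /and3P [? ? ?]]]; exists u, p.
    move=> /existsPn Hn; exfalso.
    have cl : forall s t, mx_graph A s t ->
        (fun v => (v == y) || mx_graph A y v) s ->
        (fun v => (v == y) || mx_graph A y v) t.
      move=> s t est /= /orP [/eqP es|eys]; first by subst s; rewrite est orbT.
      move: (Hn s) => /existsPn /(_ t); rewrite eys est /= negbK => ->.
      done.
    move: (closed_path _ cl (Hconn y w)) => /=.
    by rewrite eqxx (negbTE wy) (negbTE nyw) => /(_ isT).
  have := congr1 (fun M : 'M[R]_n => M x p) HAXA.
  rewrite (Ax0 p py) mxE.
  under eq_bigr do rewrite Prow -mulrA.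
  rewrite -mulr_sumr (bigD1 u) //= big1 ?addr0.
    move/eqP; rewrite !mulf_eq0 (negbTE c0).
    by move: eyu eup => /andP [_ /negbTE ->] /andP [_ /negbTE ->].
  move=> k ku; case: (eqVneq (A y k * A k p) 0) => // H; exfalso.
  have eyk : mx_graph A y k.
    rewrite /mx_graph; move: H; rewrite mulf_eq0 negb_or => /andP [h _].
    apply/andP; split => //.
    by case: (eqVneq y k) h => // ->; rewrite Hdiag eqxx.
  have ekp : mx_graph A k p.
    rewrite /mx_graph; move: H; rewrite mulf_eq0 negb_or => /andP [_ h].
    apply/andP; split => //.
    by case: (eqVneq k p) h => // ->; rewrite Hdiag eqxx.
  move: (Hacyc [:: y; u; p; k]) => /=.
  have yu : y != u by case/andP: eyu.
  have yk : y != k by case/andP: eyk.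
  have up : u != p by case/andP: eup.
  have kp : k != p by case/andP: ekp.
  rewrite !inE !negb_or yu (eq_sym y p) py yk up (eq_sym u k) ku (eq_sym p k) kp /=.
  move=> /(_ isT isT); rewrite eyu eup Hsym ekp Hsym eyk.
  done.
- have Psym k : (A *m X) k x = (A *m X) x k.
    have E : (A *m X)^T = A *m X by rewrite trmx_mul HAT -(ginv_unique HX HXT) HC.
    by rewrite -{1}E mxE.
  have Pid : (A *m X) *m (A *m X) = A *m X by rewrite mulmxA HAXA.
  have Pxx : (A *m X) x x = 0 by rewrite Prow Asym Ax0 ?mulr0.
  have Hs : \sum_k (A *m X) x k ^+ 2 = 0.
    have -> : \sum_k (A *m X) x k ^+ 2 = ((A *m X) *m (A *m X)) x x.
      by rewrite mxE; apply: eq_bigr => k _; rewrite Psym expr2.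
    by rewrite Pid Pxx.
  have P0 k : (A *m X) x k = 0.
    apply/eqP; rewrite -sqrf_eq0; apply/eqP.
    by apply: (psumr_eq0P _ Hs) => // j _; exact: sqr_ge0.
  have := congr1 (fun M : 'M[R]_n => M x y) HAXA.
  rewrite mxE big1 => [H0|k _]; last by rewrite P0 mul0r.
  by move: ha; rewrite -Asym -H0 eqxx.
Qed.
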